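(* (1) $0$ has exactly one infinite OOCF expansion, namely the constant sequence $(2,-1),(2,-1),\dots$; every $\infty$-rational $x\in(0,1)$ has exactly two infinite OOCF expansions and no finite OOCF expansion, and both infinite expansions are eventually the constant sequence $(2,-1)$. (2) Every $1$-rational $x\in(0,1)$ has no infinite OOCF expansion and exactly two finite OOCF expansions; these have the same length and differ only in their last digit. (3) Every irrational $x\in(0,1)$ has a unique infinite OOCF expansion (and no finite one).
   Context: Rationals are written $p/q$ with $p\in\mathbb Z$, $q\in\mathbb N$, $\gcd(p,q)=1$. A rational $p/q$ is a $1$-rational if $p,q$ are both odd and an $\infty$-rational if $p,q$ have different parity. Admissible digits: $D=\{(1,1)\}\cup\{(a,\varepsilon): a\in\mathbb Z,\ a\ge2,\ \varepsilon\in\{-1,1\}\}$. For integers $k\ge1$ put $B(k+1,-1)=\left[\frac{k-1}{k},\frac{2k-1}{2k+1}\right]$ and $B(k,1)=\left[\frac{2k-1}{2k+1},\frac{k}{k+1}\right]$. The OOCF map $T:[0,1]\to[0,1]$ is $T(x)=\frac{kx-(k-1)}{k-(k+1)x}$ for $x\in B(k+1,-1)$, $T(x)=\frac{k-(k+1)x}{kx-(k-1)}$ for $x\in B(k,1)$ ($k\ge1$; the formulas agree at common endpoints), and $T(1)=1$. An infinite OOCF expansion of $x\in[0,1]$ is a sequence $((a_n,\varepsilon_n))_{n\ge1}$ in $D$ with $T^{n-1}(x)\in B(a_n,\varepsilon_n)$ and $T^{n-1}(x)\neq1$ for all $n\ge1$. A finite OOCF expansion of $x$ of length $N\ge1$ is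 a sequence $((a_n,\varepsilon_n))_{n=1}^N$ in $D$ with $T^{n-1}(x)\in B(a_n,\varepsilon_n)$ and $T^{n-1}(x)\ne1$ for $1\le n\le N$, and $T^N(x)=1$. *)

(* Defs.v *)
From Stdlib Require Import Reals ZArith List.
Open Scope R_scope.

Definition digit : Type := (Z * Z)%type.

Definition admissible (d : digit) : Prop :=
  d = (1%Z, 1%Z) \/
  ((2 <= fst d)%Z /\ (snd d = (-1)%Z \/ snd d = 1%Z)).

Definition inB (d : digit) (x : R) : Prop :=
  let a := fst d in
  let e := snd d in
  (e = (-1)%Z /\ (1 <= a - 1)%Z /\
     let k := IZR (a - 1) in
     (k - 1) / k <= x <= (2 * k - 1) / (2 * k + 1)) \/
  (e = 1%Z /\ (1 <= a)%Z /\
     let k := IZR a in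
     (2 * k - 1) / (2 * k + 1) <= x <= k / (k + 1)).

(* For x in [0,1), the integer k >= 1 with
   (k-1)/k <= x < k/(k+1) is k = floor(1/(1-x)); then x lies in B(k+1,-1)
   if x <= (2k-1)/(2k+1) and in B(k,1) otherwise (the two formulas agree at
   common endpoints).  T(1) = 1.  (Values outside [0,1] are irrelevant.) *)
Definition oocf_T (x : R) : R :=
  if Rle_dec 1 x then 1 else
  let k := IZR (Int_part (1 / (1 - x))) in
  if Rle_dec x ((2 * k - 1) / (2 * k + 1))
  then (k * x - (k - 1)) / (k - (k + 1) * x)
  else (k - (k + 1) * x) / (k * x - (k - 1)).

Definition oocf_iter (n : nat) (x : R) : R := Nat.iter n oocf_T x.

(* Infinite OOCF expansion: s n is the (n+1)-th digit (0-indexed). *)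
Definition inf_expansion (x : R) (s : nat -> digit) : Prop :=
  forall n : nat,
    admissible (s n) /\ inB (s n) (oocf_iter n x) /\ oocf_iter n x <> 1.

Definition fin_expansion (x : R) (l : list digit) : Prop :=
  (1 <= length l)%nat /\
  (forall i : nat, (i < length l)%nat ->
     admissible (nth i l (1%Z, 1%Z)) /\
     inB (nth i l (1%Z, 1%Z)) (oocf_iter i x) /\ oocf_iter i x <> 1) /\
  oocf_iter (length l) x = 1.

Definition reduced_frac (x : R) (p q : Z) : Prop :=
  (0 < q)%Z /\ Z.gcd p q = 1%Z /\ x = IZR p / IZR q.

Definition one_rational (x : R) : Prop :=
  exists p q : Z, reduced_frac x p q /\ Z.odd p = true /\ Z.odd q = true.

Definition infty_rational (x : R) : Prop :=
  exists p q : Z, reduced_frac x p q /\ Z.odd p <> Z.odd q.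

Definition irrational (x : R) : Prop :=
  ~ exists p q : Z, (0 < q)%Z /\ x = IZR p / IZR q.

(* Main.v *)
Require Import Defs.
From Stdlib Require Import Reals ZArith List Lra Lia.
Open Scope R_scope.

Lemma div_le_iff a b y : 0 < b -> (a / b <= y <-> a <= y * b).
Proof.
  intros Hb; split; intro H.
  - apply Rmult_le_compat_r with (r := b) in H; [|lra].
    replace (a / b * b) with a in H by (field; lra). lra.
  - apply Rmult_le_reg_r with b; [lra|].
    replace (a / b * b) with a by (field; lra). lra.
Qed.

Lemma le_div_iff a b y : 0 < b -> (y <= a / b <-> y * b <= a).
Proof.
  intros Hb; split; intro H.
  - apply Rmult_le_compat_r with (r := b) in H; [|lra].
    replace (a / b * b) with a in H by (field; lra). lra.
  - apply Rmult_le_reg_r with b; [lra|].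
    replace (a / b * b) with a by (field; lra). lra.
Qed.

Definition idx (d : digit) : Z :=
  if Z.eq_dec (snd d) (-1) then (2 * fst d - 4)%Z else (2 * fst d - 1)%Z.

Definition valid (d : digit) : Prop := (snd d = -1 \/ snd d = 1)%Z.

Definition inP (i : Z) (y : R) : Prop :=
  (0 <= i)%Z /\ IZR i <= y * (IZR i + 2) /\ y * (IZR i + 3) <= IZR i + 1.

Lemma inB_poly d y : inB d y <-> valid d /\ inP (idx d) y.
Proof.
  destruct d as [a e]; unfold inB, idx, valid, inP; cbn [fst snd]. split.
  - intros [[He [Ha H]] | [He [Ha H]]]; subst e.
    + destruct (Z.eq_dec (-1) (-1)) as [_|C]; [|lia].
      assert (Hk : 1 <= IZR (a - 1)) by (apply IZR_le; lia).
      set (k := IZR (a-1)) in *.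
      assert (E : IZR (2 * a - 4) = 2 * k - 2) by
        (unfold k; rewrite !minus_IZR, mult_IZR; ring).
      destruct H as [H1 H2].
      apply div_le_iff in H1; [|lra]. apply le_div_iff in H2; [|lra].
      split; [left; reflexivity|]. split; [lia|]. rewrite E. split; lra.
    + destruct (Z.eq_dec 1 (-1)) as [C|_]; [lia|].
      assert (Hk : 1 <= IZR a) by (apply IZR_le; lia).
      set (k := IZR a) in *.
      assert (E : IZR (2 * a - 1) = 2 * k - 1) by
        (unfold k; rewrite !minus_IZR, mult_IZR; ring).
      destruct H as [H1 H2].
      apply div_le_iff in H1; [|lra]. apply le_div_iff in H2; [|lra].
      split; [right; reflexivity|]. split; [lia|]. rewrite E. split; lra.
  - intros [[He|He] [Hi [H1 H2]]]; subst e.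
    + destruct (Z.eq_dec (-1) (-1)) as [_|C]; [|lia].
      left. split; [reflexivity|]. split; [lia|].
      assert (Hk : 1 <= IZR (a - 1)) by (apply IZR_le; lia).
      set (k := IZR (a-1)) in *.
      assert (E : IZR (2 * a - 4) = 2 * k - 2) by
        (unfold k; rewrite !minus_IZR, mult_IZR; ring).
      rewrite E in H1, H2. cbv zeta.
      split; [apply div_le_iff; lra | apply le_div_iff; lra].
    + destruct (Z.eq_dec 1 (-1)) as [C|_]; [lia|].
      right. split; [reflexivity|]. split; [lia|].
      assert (Hk : 1 <= IZR a) by (apply IZR_le; lia).
      set (k := IZR a) in *.
      assert (E : IZR (2 * a - 1) = 2 * k - 1) by
        (unfold k; rewrite !minus_IZR, mult_IZR; ring).
      rewrite E in H1, H2. cbv zeta.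
      split; [apply div_le_iff; lra | apply le_div_iff; lra].
Qed.

Lemma idx_inj d1 d2 : valid d1 -> valid d2 -> idx d1 = idx d2 -> d1 = d2.
Proof.
  destruct d1 as [a1 e1], d2 as [a2 e2]; unfold valid, idx; cbn [fst snd].
  intros [H1|H1] [H2|H2]; subst; cbn [fst snd];
  repeat match goal with |- context [Z.eq_dec ?a ?b] => destruct (Z.eq_dec a b); try lia end;
  intros; f_equal; lia.
Qed.

Definition dig_of (i : Z) : digit :=
  if Z.odd i then (Z.div2 i + 1, 1)%Z else (Z.div2 i + 2, -1)%Z.

Lemma dig_of_ok i : valid (dig_of i) /\ idx (dig_of i) = i.
Proof.
  unfold dig_of, valid, idx. pose proof (Z.div2_odd i) as H.
  destruct (Z.odd i); cbn [fst snd Z.b2z] in *.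
  - destruct (Z.eq_dec 1 (-1)); [lia|]. split; [right; reflexivity| lia].
  - destruct (Z.eq_dec (-1) (-1)); [|lia]. split; [left; reflexivity| lia].
Qed.

Lemma key a b y : (0 <= a)%Z -> (0 <= b)%Z ->
  IZR a <= y * (IZR a + 2) -> y * (IZR b + 3) <= IZR b + 1 -> (a <= b + 1)%Z.
Proof.
  intros Ha Hb H1 H2.
  apply IZR_le in Ha. apply IZR_le in Hb.
  apply Rmult_le_compat_r with (r := IZR b + 3) in H1; [|lra].
  apply Rmult_le_compat_r with (r := IZR a + 2) in H2; [|lra].
  assert (IZR a <= IZR b + 1) by nra.
  apply le_IZR. rewrite plus_IZR. exact H.
Qed.

Definition Mf (d : digit) (y : R) : R :=
  if Z.eq_dec (snd d) (-1) then
    let k := IZR (fst d - 1) in (k * y - (k - 1)) / (k - (k + 1) * y)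
  else
    let k := IZR (fst d) in (k - (k + 1) * y) / (k * y - (k - 1)).

Definition Tdig (y : R) : digit :=
  let K := Int_part (1 / (1 - y)) in
  if Rle_dec y ((2 * IZR K - 1) / (2 * IZR K + 1)) then (K + 1, -1)%Z else (K, 1)%Z.

Lemma frac01 n m : 0 < m -> 0 <= n <= m ->
  0 <= n / m <= 1 /\ (n / m = 0 <-> n = 0) /\ (n / m = 1 <-> n = m).
Proof.
  intros Hm Hn. split; [|split; split; intro H].
  - split; [apply Rmult_le_pos; [lra| left; apply Rinv_0_lt_compat; lra]|].
    apply div_le_iff; lra.
  - assert (n = n / m * m) by (field; lra). rewrite H in H0. lra.
  - rewrite H. field. lra.
  - assert (n = n / m * m) by (field; lra). rewrite H in H0. lra.
  - rewrite H. field. lra.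
Qed.

Definition endpt (i : Z) (y : R) : Prop :=
  y * (IZR i + 2) = IZR i \/ y * (IZR i + 3) = IZR i + 1.

Lemma Mf_props d y : inB d y ->
  0 <= Mf d y <= 1 /\ ((Mf d y = 0 \/ Mf d y = 1) <-> endpt (idx d) y).
Proof.
  intro H. apply inB_poly in H. destruct H as [Hv [Hi [H1 H2]]].
  destruct d as [a e]; unfold valid, idx, Mf, endpt in *; cbn [fst snd] in *.
  destruct Hv as [He|He]; subst e.
  - destruct (Z.eq_dec (-1) (-1)) as [_|C]; [|lia].
    rewrite minus_IZR in *. rewrite mult_IZR in *.
    assert (Ha : 2 <= IZR a) by (apply IZR_le; lia).
    repeat rewrite ?minus_IZR, ?mult_IZR. set (A := IZR a) in *. cbv zeta.
    assert (Hy1 : y < 1) by nra.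
    assert (Hy0 : 0 <= y) by nra.
    destruct (frac01 ((A - 1) * y - (A - 1 - 1)) (A - 1 - (A - 1 + 1) * y)) as [R1 [R2 R3]];
      [nra | split; nra |].
    split; [exact R1|]. rewrite R2, R3. split; intros [E|E]; [left|right|left|right]; nra.
  - destruct (Z.eq_dec 1 (-1)) as [C|_]; [lia|].
    rewrite minus_IZR in *. rewrite mult_IZR in *.
    assert (Ha : 1 <= IZR a) by (apply IZR_le; lia).
    repeat rewrite ?minus_IZR, ?mult_IZR. set (A := IZR a) in *. cbv zeta.
    assert (Hy1 : y < 1) by nra.
    assert (Hy0 : 0 < y) by nra.
    destruct (frac01 (A - (A + 1) * y) (A * y - (A - 1))) as [R1 [R2 R3]];
      [nra | split; nra |].
    split; [exact R1|]. rewrite R2, R3. split; intros [E|E]; [right|left|right|left]; nra.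
Qed.

Lemma Tdig_ok y : 0 <= y < 1 -> inB (Tdig y) y /\ oocf_T y = Mf (Tdig y) y.
Proof.
  intros Hy. unfold oocf_T, Tdig.
  destruct (Rle_dec 1 y) as [C|_]; [lra|].
  set (K := Int_part (1 / (1 - y))).
  destruct (base_Int_part (1 / (1 - y))) as [B1 B2]. fold K in B1, B2.
  assert (Hq : 1 <= 1 / (1 - y)) by (apply le_div_iff; lra).
  assert (HK : (1 <= K)%Z) by (assert (H0K : IZR 0 < IZR K) by lra; apply lt_IZR in H0K; lia).
  assert (Hk : 1 <= IZR K) by (apply IZR_le; exact HK).
  set (k := IZR K) in *.
  apply le_div_iff in B1; [|lra].
  assert (B3 : (k + 1) * (1 - y) > 1).
  { assert (1 / (1 - y) * (1 - y) = 1) by (field; lra). nra. }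
  destruct (Rle_dec y ((2 * k - 1) / (2 * k + 1))) as [L|L].
  - split.
    + apply inB_poly. unfold valid, idx, inP; cbn [fst snd].
      destruct (Z.eq_dec (-1) (-1)) as [_|C]; [|lia].
      split; [left; reflexivity|]. split; [lia|].
      rewrite minus_IZR, mult_IZR, plus_IZR. fold k.
      apply le_div_iff in L; [|lra]. split; nra.
    + unfold Mf; cbn [fst snd].
      destruct (Z.eq_dec (-1) (-1)) as [_|C]; [|lia].
      replace (K + 1 - 1)%Z with K by ring. reflexivity.
  - split.
    + apply inB_poly. unfold valid, idx, inP; cbn [fst snd].
      destruct (Z.eq_dec 1 (-1)) as [C|_]; [lia|].
      split; [right; reflexivity|]. split; [lia|].
      rewrite minus_IZR, mult_IZR. fold k.
      assert (L' : (2 * k - 1) / (2 * k + 1) < y) by lra.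
      assert (y * (2*k+1) > 2*k-1).
      { assert (~ (y * (2*k+1) <= 2*k-1)) by (intro C; apply L; apply le_div_iff; lra). lra. }
      split; nra.
    + unfold Mf; cbn [fst snd].
      destruct (Z.eq_dec 1 (-1)) as [C|_]; [lia|]. reflexivity.
Qed.

Lemma T_range y : 0 <= y <= 1 -> 0 <= oocf_T y <= 1.
Proof.
  intros Hy. destruct (Req_dec y 1) as [E|E].
  - subst. unfold oocf_T. destruct (Rle_dec 1 1); lra.
  - destruct (Tdig_ok y) as [H1 H2]; [lra|]. rewrite H2.
    apply (Mf_props _ _ H1).
Qed.

Lemma iter_S n y : oocf_iter (S n) y = oocf_iter n (oocf_T y).
Proof.
  unfold oocf_iter. induction n; simpl; [reflexivity|].
  simpl in IHn. rewrite IHn. reflexivity.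
Qed.

Lemma iter_S' n y : oocf_iter (S n) y = oocf_T (oocf_iter n y).
Proof. reflexivity. Qed.

Lemma inP_key i j y : inP i y -> inP j y -> (i <= j + 1)%Z.
Proof. intros [Hi [H1 H2]] [Hj [H3 H4]]. apply (key i j y); auto. Qed.

Lemma endpt_shared i t y : inP i y -> inP (i + 1) y -> inP t y -> endpt t y.
Proof.
  intros Hi Hj Ht.
  pose proof (inP_key _ _ _ Ht Hi). pose proof (inP_key _ _ _ Hj Ht).
  destruct Hi as [_ [_ H2]]. destruct Hj as [_ [H3 _]].
  rewrite plus_IZR in H3.
  assert (E : y * (IZR i + 3) = IZR i + 1) by lra.
  unfold endpt.
  assert (t = i \/ t = i + 1)%Z as [-> | ->] by lia.
  - right; exact E.
  - left. rewrite plus_IZR. lra.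
Qed.

Lemma digit_unique y d1 d2 : 0 <= y < 1 -> 0 < oocf_T y < 1 ->
  inB d1 y -> inB d2 y -> d1 = d2.
Proof.
  intros Hy HT H1 H2.
  destruct (Tdig_ok y Hy) as [Ht HTe].
  apply inB_poly in H1 as [V1 P1]. apply inB_poly in H2 as [V2 P2].
  destruct (Z.eq_dec (idx d1) (idx d2)) as [E|NE]; [apply idx_inj; auto|].
  exfalso.
  pose proof (inP_key _ _ _ P1 P2). pose proof (inP_key _ _ _ P2 P1).
  assert (EP : endpt (idx (Tdig y)) y).
  { apply inB_poly in Ht as Ht'. destruct Ht' as [_ Pt].
    assert (idx d2 = idx d1 + 1 \/ idx d1 = idx d2 + 1)%Z as [E|E] by lia.
    - rewrite E in P2. apply (endpt_shared _ _ _ P1 P2 Pt).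
    - rewrite E in P1. apply (endpt_shared _ _ _ P2 P1 Pt). }
  apply (Mf_props _ _ Ht) in EP. rewrite <- HTe in EP. lra.
Qed.

Lemma two_digits y d : 0 < y < 1 -> inB d y -> endpt (idx d) y ->
  exists d', d' <> d /\ inB d' y /\ forall d'', inB d'' y -> d'' = d \/ d'' = d'.
Proof.
  intros Hy Hd He. apply inB_poly in Hd as Hd'. destruct Hd' as [V P].
  set (i := idx d) in *.
  destruct He as [L|R].
  - assert (Hi1 : (1 <= i)%Z).
    { destruct P as [Hi _]. destruct (Z.eq_dec i 0) as [E|]; [|lia].
      rewrite E in L. simpl in L. lra. }
    destruct (dig_of_ok (i - 1)) as [V' I'].
    exists (dig_of (i - 1)). split; [|split].
    + intro C. rewrite C in I'. fold i in I'. lia.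
    + apply inB_poly. split; [exact V'|]. rewrite I'.
      unfold inP. rewrite minus_IZR. split; [lia|]. split; lra.
    + intros d'' H''. apply inB_poly in H'' as [V'' P''].
      pose proof (inP_key _ _ _ P P''). pose proof (inP_key _ _ _ P'' P).
      destruct (Z.eq_dec (idx d'') i) as [E|NE].
      * left. apply idx_inj; auto.
      * destruct (Z.eq_dec (idx d'') (i - 1)) as [E|NE2].
        -- right. apply idx_inj; auto. rewrite I'. exact E.
        -- exfalso. assert (E : idx d'' = (i + 1)%Z) by lia.
           rewrite E in P''. destruct P'' as [_ [Q _]]. rewrite plus_IZR in Q. lra.
  - destruct (dig_of_ok (i + 1)) as [V' I'].
    exists (dig_of (i + 1)). split; [|split].
    + intro C. rewrite C in I'. fold i in I'. lia.
    + apply inB_poly. split; [exact V'|]. rewrite I'. destruct P as [Hi _].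
      unfold inP. rewrite plus_IZR. split; [lia|]. split; lra.
    + intros d'' H''. apply inB_poly in H'' as [V'' P''].
      pose proof (inP_key _ _ _ P P''). pose proof (inP_key _ _ _ P'' P).
      destruct (Z.eq_dec (idx d'') i) as [E|NE].
      * left. apply idx_inj; auto.
      * destruct (Z.eq_dec (idx d'') (i + 1)) as [E|NE2].
        -- right. apply idx_inj; auto. rewrite I'. exact E.
        -- exfalso. assert (E : idx d'' = (i - 1)%Z) by lia.
           rewrite E in P''. destruct P'' as [_ [_ Q]]. rewrite minus_IZR in Q. lra.
Qed.

Lemma inB_adm d y : inB d y -> admissible d.
Proof.
  destruct d as [a e]. unfold inB, admissible; cbn [fst snd].
  intros [[He [Ha _]] | [He [Ha _]]]; subst.
  - right. cbn [fst snd]. split; [lia| left; reflexivity].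
  - destruct (Z.eq_dec a 1) as [->|]; [left; reflexivity|].
    right. cbn [fst snd]. split; [lia| right; reflexivity].
Qed.

Lemma zero_digit d : inB d 0 -> d = (2%Z, (-1)%Z).
Proof.
  intro H. apply inB_poly in H as [V [Hi [H1 H2]]].
  assert (idx d = 0%Z).
  { assert (IZR (idx d) <= IZR 0) by lra. apply le_IZR in H. lia. }
  apply idx_inj; auto. unfold valid; left; reflexivity.
Qed.

Lemma inB_zero : inB (2%Z, (-1)%Z) 0.
Proof. apply inB_poly. split; [left; reflexivity|]. unfold inP, idx; simpl. split; [lia|]. lra. Qed.

Lemma T_zero : oocf_T 0 = 0.
Proof.
  destruct (Tdig_ok 0) as [H1 H2]; [lra|]. rewrite H2.
  rewrite (zero_digit _ H1). unfold Mf; simpl. field.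
Qed.

Lemma T_one : oocf_T 1 = 1.
Proof. unfold oocf_T. destruct (Rle_dec 1 1); lra. Qed.

Lemma iter_const c n : oocf_T c = c -> oocf_iter n c = c.
Proof. intro H. induction n; [reflexivity|]. rewrite iter_S', IHn. exact H. Qed.

Lemma iter_add n m y : oocf_iter (n + m) y = oocf_iter n (oocf_iter m y).
Proof. unfold oocf_iter. apply Nat.iter_add. Qed.

Definition par_ok (p q p' q' : Z) : Prop :=
  (Z.odd p' && Z.odd q')%bool = (Z.odd p && Z.odd q)%bool /\
  xorb (Z.odd p') (Z.odd q') = xorb (Z.odd p) (Z.odd q).

Lemma step_rat d y p q : inB d y -> 0 < y < 1 -> (0 < q)%Z -> y = IZR p / IZR q ->
  exists p' q', (0 < q')%Z /\ (q' < q)%Z /\ Mf d y = IZR p' / IZR q' /\ par_ok p q p' q'.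
Proof.
  intros H Hy Hq Hyq.
  assert (HQ : 0 < IZR q) by (apply IZR_lt; exact Hq).
  assert (HP : IZR p = y * IZR q) by (rewrite Hyq; field; lra).
  destruct d as [a e]. unfold inB in H; cbn [fst snd] in H.
  unfold Mf; cbn [fst snd].
  destruct H as [[He [Ha [H1 H2]]] | [He [Ha [H1 H2]]]]; subst e.
  - destruct (Z.eq_dec (-1) (-1)) as [_|C]; [|lia].
    set (K := (a - 1)%Z) in *.
    assert (Hk : 1 <= IZR K) by (apply IZR_le; exact Ha).
    set (k := IZR K) in *. cbv zeta in *.
    apply div_le_iff in H1; [|lra]. apply le_div_iff in H2; [|lra].
    exists (K * p - (K - 1) * q)%Z, (K * q - (K + 1) * p)%Z.
    assert (Eq' : IZR (K * q - (K + 1) * p) = IZR q * (k - (k + 1) * y)).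
    { rewrite minus_IZR, !mult_IZR, plus_IZR, HP. fold k. ring. }
    assert (Ep' : IZR (K * p - (K - 1) * q) = IZR q * (k * y - (k - 1))).
    { rewrite minus_IZR, !mult_IZR, minus_IZR, HP. fold k. ring. }
    assert (D1 : 0 < k - (k + 1) * y) by nra.
    assert (D2 : k - (k + 1) * y < 1) by nra.
    split; [|split; [|split]].
    + apply lt_IZR. rewrite Eq'. simpl. nra.
    + apply lt_IZR. rewrite Eq'. nra.
    + rewrite Eq', Ep'. field. split; lra.
    + unfold par_ok. rewrite !Z.odd_sub, !Z.odd_mul, Z.odd_sub, Z.odd_add.
      destruct (Z.odd K), (Z.odd p), (Z.odd q); split; reflexivity.
  - destruct (Z.eq_dec 1 (-1)) as [C|_]; [lia|].
    assert (Hk : 1 <= IZR a) by (apply IZR_le; exact Ha).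
    set (k := IZR a) in *. cbv zeta in *.
    apply div_le_iff in H1; [|lra]. apply le_div_iff in H2; [|lra].
    exists (a * q - (a + 1) * p)%Z, (a * p - (a - 1) * q)%Z.
    assert (Eq' : IZR (a * p - (a - 1) * q) = IZR q * (k * y - (k - 1))).
    { rewrite minus_IZR, !mult_IZR, minus_IZR, HP. fold k. ring. }
    assert (Ep' : IZR (a * q - (a + 1) * p) = IZR q * (k - (k + 1) * y)).
    { rewrite minus_IZR, !mult_IZR, plus_IZR, HP. fold k. ring. }
    assert (D1 : 0 < k * y - (k - 1)) by nra.
    assert (D2 : k * y - (k - 1) < 1) by nra.
    split; [|split; [|split]].
    + apply lt_IZR. rewrite Eq'. simpl. nra.
    + apply lt_IZR. rewrite Eq'. nra.
    + rewrite Eq', Ep'. field. split; lra.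
    + unfold par_ok. rewrite !Z.odd_sub, !Z.odd_mul, Z.odd_sub, Z.odd_add.
      destruct (Z.odd a), (Z.odd p), (Z.odd q); split; reflexivity.
Qed.

Lemma par_trans p q p' q' p'' q'' : par_ok p q p' q' -> par_ok p' q' p'' q'' -> par_ok p q p'' q''.
Proof. unfold par_ok. intros [A B] [C D]. split; congruence. Qed.

Lemma descent : forall (N : nat) (p q : Z) (y : R), (0 < q)%Z -> (Z.to_nat q <= N)%nat ->
  y = IZR p / IZR q -> 0 < y < 1 ->
  exists m, (forall j, (j <= m)%nat -> 0 < oocf_iter j y < 1) /\
    exists p' q', (0 < q')%Z /\ oocf_iter (S m) y = IZR p' / IZR q' /\
      (oocf_iter (S m) y = 0 \/ oocf_iter (S m) y = 1) /\ par_ok p q p' q'.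
Proof.
  induction N as [|N IH]; intros p q y Hq HN Hyq Hy; [lia|].
  destruct (Tdig_ok y) as [Ht HT]; [lra|].
  destruct (step_rat _ _ p q Ht Hy Hq Hyq) as [p' [q' [Hq' [Hlt [HM Hpar]]]]].
  rewrite <- HT in HM.
  pose proof (T_range y) as TR.
  destruct (Req_dec (oocf_T y) 0) as [E0|N0].
  { exists 0%nat. split.
    - intros j Hj. assert (j = 0%nat) by lia. subst. simpl. exact Hy.
    - exists p', q'. rewrite iter_S'. simpl. auto. }
  destruct (Req_dec (oocf_T y) 1) as [E1|N1].
  { exists 0%nat. split.
    - intros j Hj. assert (j = 0%nat) by lia. subst. simpl. exact Hy.
    - exists p', q'. rewrite iter_S'. simpl. auto. }
  assert (HT01 : 0 < oocf_T y < 1) by (specialize (TR ltac:(lra)); lra).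
  destruct (IH p' q' (oocf_T y) Hq' ltac:(lia) HM HT01) as [m [Hm [p'' [q'' [A [B [C D]]]]]]].
  exists (S m). split.
  - intros j Hj. destruct j as [|j]; [simpl; exact Hy|].
    rewrite iter_S. apply Hm. lia.
  - exists p'', q''. rewrite iter_S. split; [exact A|]. split; [exact B|]. split; [exact C|].
    eapply par_trans; eassumption.
Qed.

Lemma eq_div y n d : d <> 0 -> y * d = n -> y = n / d.
Proof. intros Hd H. rewrite <- H. field. exact Hd. Qed.

Definition ratl (y : R) : Prop := exists p q : Z, (q <> 0)%Z /\ y = IZR p / IZR q.

Lemma ratl_pos y : ratl y -> exists p q : Z, (0 < q)%Z /\ y = IZR p / IZR q.
Proof.
  intros [p [q [Hq E]]]. destruct (Z_lt_le_dec 0 q).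
  - exists p, q; auto.
  - exists (- p)%Z, (- q)%Z. split; [lia|]. rewrite E, !opp_IZR. field.
    intro C. apply eq_IZR in C. lia.
Qed.

Lemma irr_step y : 0 < y < 1 -> irrational y -> 0 < oocf_T y < 1 /\ irrational (oocf_T y).
Proof.
  intros Hy Hir.
  destruct (Tdig_ok y) as [Ht HT]; [lra|].
  assert (Hrat : forall r, ratl r -> ~ irrational r).
  { intros r Hr C. apply C. apply ratl_pos. exact Hr. }
  destruct (Mf_props _ _ Ht) as [R01 Rend].
  split.
  - rewrite HT. destruct (Req_dec (Mf (Tdig y) y) 0) as [E|E];
      [|destruct (Req_dec (Mf (Tdig y) y) 1) as [E'|E']]; try lra.
    + exfalso. assert (EP : endpt (idx (Tdig y)) y) by (apply Rend; auto).
      apply (Hrat y); [|exact Hir].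
      set (i := idx (Tdig y)) in *. apply inB_poly in Ht as [_ [Hi _]].
      destruct EP as [L|R].
      * exists i, (i + 2)%Z. split; [lia|]. rewrite plus_IZR.
        assert (0 <= IZR i) by (apply IZR_le; lia). apply eq_div; lra.
      * exists (i + 1)%Z, (i + 3)%Z. split; [lia|]. rewrite !plus_IZR.
        assert (0 <= IZR i) by (apply IZR_le; lia). apply eq_div; lra.
    + exfalso. assert (EP : endpt (idx (Tdig y)) y) by (apply Rend; auto).
      apply (Hrat y); [|exact Hir].
      set (i := idx (Tdig y)) in *. apply inB_poly in Ht as [_ [Hi _]].
      destruct EP as [L|R].
      * exists i, (i + 2)%Z. split; [lia|]. rewrite plus_IZR.
        assert (0 <= IZR i) by (apply IZR_le; lia). apply eq_div; lra.
      * exists (i + 1)%Z, (i + 3)%Z. split; [lia|]. rewrite !plus_IZR.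
        assert (0 <= IZR i) by (apply IZR_le; lia). apply eq_div; lra.
  - intros [p [q [Hq E]]]. apply (Hrat y); [|exact Hir].
    rewrite HT in E. remember (Tdig y) as d.
    destruct d as [a e]. unfold inB in Ht; cbn [fst snd] in Ht.
    unfold Mf in E; cbn [fst snd] in E.
    assert (HQ : 0 < IZR q) by (apply IZR_lt; exact Hq).
    destruct Ht as [[He [Ha [H1 H2]]] | [He [Ha [H1 H2]]]]; subst e.
    + destruct (Z.eq_dec (-1) (-1)) as [_|C]; [|lia].
      set (K := (a - 1)%Z) in *.
      assert (Hk : 1 <= IZR K) by (apply IZR_le; exact Ha).
      set (k := IZR K) in *. cbv zeta in *.
      apply div_le_iff in H1; [|lra]. apply le_div_iff in H2; [|lra].
      assert (D1 : 0 < k - (k + 1) * y) by nra.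
      assert (E2 : IZR p * (k - (k + 1) * y) = IZR q * (k * y - (k - 1))).
      { assert (IZR p = IZR p / IZR q * IZR q) by (field; lra). rewrite H, <- E. field. lra. }
      assert (Hp : 0 <= IZR p).
      { assert (0 <= k * y - (k - 1)) by nra. nra. }
      exists (K * p + (K - 1) * q)%Z, (K * q + (K + 1) * p)%Z.
      assert (Hd : 0 < IZR (K * q + (K + 1) * p)).
      { rewrite plus_IZR, !mult_IZR, plus_IZR. fold k. nra. }
      split; [intro C; rewrite C in Hd; simpl in Hd; lra|].
      assert (Ed: IZR (K*q+(K+1)*p) = k*IZR q + (k+1)*IZR p) by (rewrite plus_IZR, !mult_IZR, plus_IZR; fold k; ring).
      assert (En: IZR (K*p+(K-1)*q) = k*IZR p + (k-1)*IZR q) by (rewrite plus_IZR, !mult_IZR, minus_IZR; fold k; ring).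
      rewrite En, Ed. apply eq_div; lra.
    + destruct (Z.eq_dec 1 (-1)) as [C|_]; [lia|].
      assert (Hk : 1 <= IZR a) by (apply IZR_le; exact Ha).
      set (k := IZR a) in *. cbv zeta in *.
      apply div_le_iff in H1; [|lra]. apply le_div_iff in H2; [|lra].
      assert (D1 : 0 < k * y - (k - 1)) by nra.
      assert (E2 : IZR p * (k * y - (k - 1)) = IZR q * (k - (k + 1) * y)).
      { assert (IZR p = IZR p / IZR q * IZR q) by (field; lra). rewrite H, <- E. field. lra. }
      assert (Hp : 0 <= IZR p).
      { assert (0 <= k - (k + 1) * y) by nra. nra. }
      exists (a * q + (a - 1) * p)%Z, (a * p + (a + 1) * q)%Z.
      assert (Hd : 0 < IZR (a * p + (a + 1) * q)).
      { rewrite plus_IZR, !mult_IZR, plus_IZR. fold k. nra. }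
      split; [intro C; rewrite C in Hd; simpl in Hd; lra|].
      assert (Ed: IZR (a*p+(a+1)*q) = k*IZR p + (k+1)*IZR q) by (rewrite plus_IZR, !mult_IZR, plus_IZR; fold k; ring).
      assert (En: IZR (a*q+(a-1)*p) = k*IZR q + (k-1)*IZR p) by (rewrite plus_IZR, !mult_IZR, minus_IZR; fold k; ring).
      rewrite En, Ed. apply eq_div; lra.
Qed.

Lemma orbit_after x m c : oocf_iter (S m) x = c -> oocf_T c = c ->
  forall n, (S m <= n)%nat -> oocf_iter n x = c.
Proof.
  intros H Hc n Hn. replace n with ((n - S m) + S m)%nat by lia.
  rewrite iter_add, H. apply iter_const. exact Hc.
Qed.

Lemma nth_map_seq (f : nat -> digit) n i d : (i < n)%nat -> nth i (map f (seq 0 n)) d = f i.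
Proof.
  intro H. rewrite (nth_indep _ _ (f 0%nat)); [|rewrite length_map, length_seq; exact H].
  rewrite map_nth, seq_nth; auto.
Qed.

Lemma rat_struct x m : (forall j, (j <= m)%nat -> 0 < oocf_iter j x < 1) ->
  (oocf_iter (S m) x = 0 \/ oocf_iter (S m) x = 1) ->
  (forall j d, (j < m)%nat -> inB d (oocf_iter j x) -> d = Tdig (oocf_iter j x)) /\
  exists d', d' <> Tdig (oocf_iter m x) /\ inB d' (oocf_iter m x) /\
    forall d'', inB d'' (oocf_iter m x) -> d'' = Tdig (oocf_iter m x) \/ d'' = d'.
Proof.
  intros Hin Hend. split.
  - intros j d Hj Hd.
    assert (Hy := Hin j ltac:(lia)). assert (HT := Hin (S j) ltac:(lia)).
    rewrite iter_S' in HT.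
    destruct (Tdig_ok (oocf_iter j x)) as [Ht _]; [lra|].
    apply (digit_unique (oocf_iter j x)); auto; lra.
  - assert (Hy := Hin m ltac:(lia)).
    destruct (Tdig_ok (oocf_iter m x)) as [Ht HT]; [lra|].
    apply two_digits; auto.
    apply (Mf_props _ _ Ht). rewrite <- HT, <- iter_S'. exact Hend.
Qed.

Lemma end_val p' q' v : (0 < q')%Z -> v = IZR p' / IZR q' ->
  (v = 0 -> p' = 0%Z) /\ (v = 1 -> p' = q').
Proof.
  intros Hq E. assert (HQ : 0 < IZR q') by (apply IZR_lt; exact Hq).
  assert (EP : IZR p' = v * IZR q') by (rewrite E; field; lra).
  split; intro H; rewrite H in EP.
  - apply eq_IZR. rewrite EP. ring.
  - apply eq_IZR. rewrite EP. ring.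
Qed.

Lemma part1a : inf_expansion 0 (fun _ => (2%Z, (-1)%Z)) /\
   forall s, inf_expansion 0 s -> forall n, s n = (2%Z, (-1)%Z).
Proof.
  split.
  - intro n. rewrite (iter_const 0 n T_zero).
    split; [apply (inB_adm _ 0 inB_zero)|]. split; [exact inB_zero| lra].
  - intros s Hs n. destruct (Hs n) as [_ [H _]].
    rewrite (iter_const 0 n T_zero) in H. apply zero_digit; exact H.
Qed.

Lemma part3 x : 0 < x < 1 -> irrational x ->
     (forall l, ~ fin_expansion x l) /\
     exists s : nat -> digit, inf_expansion x s /\
       forall t, inf_expansion x t -> forall n, t n = s n.
Proof.
  intros Hx Hir.
  assert (Orb : forall n, 0 < oocf_iter n x < 1 /\ irrational (oocf_iter n x)).
  { induction n; [simpl; auto|]. rewrite iter_S'.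
    destruct IHn. apply irr_step; auto. }
  split.
  - intros l [_ [_ H]]. destruct (Orb (length l)) as [A _]. lra.
  - exists (fun n => Tdig (oocf_iter n x)). split.
    + intro n. destruct (Orb n) as [A _].
      destruct (Tdig_ok (oocf_iter n x)) as [Ht _]; [lra|].
      split; [eapply inB_adm; eauto|]. split; [exact Ht|lra].
    + intros t Ht n. destruct (Ht n) as [_ [H _]].
      destruct (Orb n) as [A _]. destruct (Orb (S n)) as [B _]. rewrite iter_S' in B.
      destruct (Tdig_ok (oocf_iter n x)) as [Ht' _]; [lra|].
      apply (digit_unique (oocf_iter n x)); auto; lra.
Qed.

Lemma part1b x : 0 < x < 1 -> infty_rational x ->
     (forall l, ~ fin_expansion x l) /\
     exists s1 s2 : nat -> digit,
       inf_expansion x s1 /\ inf_expansion x s2 /\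
       (exists n, s1 n <> s2 n) /\
       (forall s, inf_expansion x s ->
          (forall n, s n = s1 n) \/ (forall n, s n = s2 n)) /\
       (exists N : nat, forall n, (N <= n)%nat ->
          s1 n = (2%Z, (-1)%Z) /\ s2 n = (2%Z, (-1)%Z)).
Proof.
  intros Hx [p [q [[Hq [_ Hxq]] Hpar]]].
  destruct (descent (Z.to_nat q) p q x Hq (le_n _) Hxq Hx)
    as [m [Hin [p' [q' [Hq' [Hv [Hend Hpo]]]]]]].
  assert (H0 : oocf_iter (S m) x = 0).
  { destruct Hend as [E|E]; [exact E|]. exfalso.
    destruct (end_val p' q' _ Hq' Hv) as [_ B]. specialize (B E). subst q'.
    destruct Hpo as [_ Hx2].
    destruct (Z.odd p'), (Z.odd p), (Z.odd q); simpl in Hx2; congruence. }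
  assert (Aft : forall n, (S m <= n)%nat -> oocf_iter n x = 0)
    by (apply orbit_after; [exact H0| exact T_zero]).
  assert (Y01 : forall n, 0 <= oocf_iter n x < 1).
  { intro n. destruct (le_lt_dec n m) as [L|L].
    - specialize (Hin n L). lra.
    - rewrite (Aft n L). lra. }
  destruct (rat_struct x m Hin (or_introl H0)) as [Uniq [d' [Dne [Dd' Dall]]]].
  assert (Dig : forall n, inB (Tdig (oocf_iter n x)) (oocf_iter n x))
    by (intro n; apply Tdig_ok; apply Y01).
  assert (Late : forall n, (S m <= n)%nat -> Tdig (oocf_iter n x) = (2%Z, (-1)%Z)).
  { intros n Hn. apply zero_digit. rewrite <- (Aft n Hn). apply Dig. }
  split.
  - intros l [_ [_ H]]. specialize (Y01 (length l)). lra.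
  - exists (fun n => Tdig (oocf_iter n x)),
           (fun n => if Nat.eqb n m then d' else Tdig (oocf_iter n x)).
    split; [|split; [|split; [|split]]].
    + intro n. specialize (Y01 n). split; [eapply inB_adm; apply Dig|]. split; [apply Dig|lra].
    + intro n. specialize (Y01 n). destruct (Nat.eqb_spec n m) as [E|E].
      * subst n. split; [eapply inB_adm; eauto|]. split; [exact Dd'|lra].
      * split; [eapply inB_adm; apply Dig|]. split; [apply Dig|lra].
    + exists m. rewrite Nat.eqb_refl. intro C. apply Dne. symmetry. exact C.
    + intros s Hs.
      assert (Oth : forall n, n <> m -> s n = Tdig (oocf_iter n x)).
      { intros n Hn. destruct (Hs n) as [_ [H _]].
        destruct (le_lt_dec n m) as [L|L].
        - apply Uniq; auto. lia.
        - rewrite (Late n L). apply zero_digit. rewrite <- (Aft n L). exact H. }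
      destruct (Hs m) as [_ [Hm _]].
      destruct (Dall _ Hm) as [E|E]; [left|right]; intro n.
      * destruct (Nat.eq_dec n m) as [->|N]; auto.
      * destruct (Nat.eqb_spec n m) as [->|N]; auto.
    + exists (S m). intros n Hn. rewrite (Late n Hn).
      destruct (Nat.eqb_spec n m) as [E|E]; [lia|]. auto.
Qed.

Lemma part2 x : 0 < x < 1 -> one_rational x ->
     (forall s, ~ inf_expansion x s) /\
     exists l1 l2 : list digit,
       fin_expansion x l1 /\ fin_expansion x l2 /\ l1 <> l2 /\
       (forall l, fin_expansion x l -> l = l1 \/ l = l2) /\
       length l1 = length l2 /\ removelast l1 = removelast l2.
Proof.
  intros Hx [p [q [[Hq [_ Hxq]] [Hp Hq2]]]].
  destruct (descent (Z.to_nat q) p q x Hq (le_n _) Hxq Hx)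
    as [m [Hin [p' [q' [Hq' [Hv [Hend Hpo]]]]]]].
  assert (H1 : oocf_iter (S m) x = 1).
  { destruct Hend as [E|E]; [|exact E]. exfalso.
    destruct (end_val p' q' _ Hq' Hv) as [A _]. specialize (A E). subst p'.
    destruct Hpo as [Ha _]. rewrite Hp, Hq2 in Ha. simpl in Ha. discriminate. }
  destruct (rat_struct x m Hin (or_intror H1)) as [Uniq [d' [Dne [Dd' Dall]]]].
  assert (Dig : forall n, (n <= m)%nat -> inB (Tdig (oocf_iter n x)) (oocf_iter n x))
    by (intros n Hn; apply Tdig_ok; specialize (Hin n Hn); lra).
  split.
  - intros s Hs. destruct (Hs (S m)) as [_ [_ C]]. exact (C H1).
  - set (f1 := fun j => Tdig (oocf_iter j x)).
    set (f2 := fun j => if Nat.eqb j m then d' else Tdig (oocf_iter j x)).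
    exists (map f1 (seq 0 (S m))), (map f2 (seq 0 (S m))).
    assert (L1 : length (map f1 (seq 0 (S m))) = S m) by (rewrite length_map, length_seq; auto).
    assert (L2 : length (map f2 (seq 0 (S m))) = S m) by (rewrite length_map, length_seq; auto).
    split; [|split; [|split; [|split; [|split]]]].
    + red. rewrite L1. split; [lia|]. split; [|exact H1].
      intros i Hi. rewrite nth_map_seq by exact Hi. unfold f1.
      specialize (Hin i ltac:(lia)). split; [eapply inB_adm; apply Dig; lia|].
      split; [apply Dig; lia| lra].
    + red. rewrite L2. split; [lia|]. split; [|exact H1].
      intros i Hi. rewrite nth_map_seq by exact Hi. unfold f2.
      specialize (Hin i ltac:(lia)).
      destruct (Nat.eqb_spec i m) as [->|E].
      * split; [eapply inB_adm; eauto|]. split; [exact Dd'|lra].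
      * split; [eapply inB_adm; apply Dig; lia|]. split; [apply Dig; lia| lra].
    + intro C. assert (C' := f_equal (fun l => nth m l (1%Z, 1%Z)) C). cbv beta in C'.
      rewrite !nth_map_seq in C' by lia. unfold f1, f2 in C'.
      rewrite Nat.eqb_refl in C'. apply Dne. symmetry. exact C'.
    + intros l [Hl [Hd Hl1]].
      assert (LL : length l = S m).
      { destruct (le_lt_dec (length l) m) as [A|A].
        - specialize (Hin _ A). lra.
        - destruct (Nat.eq_dec (length l) (S m)) as [E|E]; auto.
          destruct (Hd (S m) ltac:(lia)) as [_ [_ C]]. contradiction. }
      destruct (Hd m ltac:(lia)) as [_ [Hm _]].
      destruct (Dall _ Hm) as [E|E]; [left|right];
        apply nth_ext with (d := (1%Z, 1%Z)) (d' := (1%Z, 1%Z));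
        [rewrite LL, ?L1, ?L2; reflexivity| | rewrite LL, ?L1, ?L2; reflexivity|];
        intros i Hi; rewrite LL in Hi; rewrite nth_map_seq by exact Hi;
        unfold f1, f2.
      * destruct (Nat.eq_dec i m) as [->|N]; [exact E|].
        destruct (Hd i ltac:(lia)) as [_ [Hi' _]]. apply Uniq; auto. lia.
      * destruct (Nat.eqb_spec i m) as [->|N]; [exact E|].
        destruct (Hd i ltac:(lia)) as [_ [Hi' _]]. apply Uniq; auto. lia.
    + rewrite L1, L2. reflexivity.
    + rewrite seq_S, !map_app. simpl. rewrite !removelast_last.
      apply map_ext_in. intros a Ha. apply in_seq in Ha. unfold f1, f2.
      destruct (Nat.eqb_spec a m); [lia|reflexivity].
Qed.

Theorem proposition2p1 :
  (inf_expansion 0 (fun _ => (2%Z, (-1)%Z)) /\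
   forall s, inf_expansion 0 s -> forall n, s n = (2%Z, (-1)%Z)) /\
  (forall x : R, 0 < x < 1 -> infty_rational x ->
     (forall l, ~ fin_expansion x l) /\
     exists s1 s2 : nat -> digit,
       inf_expansion x s1 /\ inf_expansion x s2 /\
       (exists n, s1 n <> s2 n) /\
       (forall s, inf_expansion x s ->
          (forall n, s n = s1 n) \/ (forall n, s n = s2 n)) /\
       (exists N : nat, forall n, (N <= n)%nat ->
          s1 n = (2%Z, (-1)%Z) /\ s2 n = (2%Z, (-1)%Z))) /\
  (forall x : R, 0 < x < 1 -> one_rational x ->
     (forall s, ~ inf_expansion x s) /\
     exists l1 l2 : list digit,
       fin_expansion x l1 /\ fin_expansion x l2 /\ l1 <> l2 /\
       (forall l, fin_expansion x l -> l = l1 \/ l = l2) /\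
       length l1 = length l2 /\ removelast l1 = removelast l2) /\
  (forall x : R, 0 < x < 1 -> irrational x ->
     (forall l, ~ fin_expansion x l) /\
     exists s : nat -> digit, inf_expansion x s /\
       forall t, inf_expansion x t -> forall n, t n = s n).
Proof.
  split; [exact part1a|]. split; [exact part1b|]. split; [exact part2| exact part3].
Qed.
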